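(* Let $X$ be a two-sided quaternionic Banach space and $T\in\mathcal{B}(X)$. Then for every $s\in\rho_S(T)$, $$\mathcal{Y}_L(s,T)=T\,S_L^{-1}(s,T)\,s,$$ where $\mathcal{Y}_L(s,T)=S_L^{-1}(s,T)s^2-s\mathcal{I}$ is the left spherical Yosida approximation of $T$.
   Context: $\mathbb{H}$ denotes the real algebra of quaternions; for $s\in\mathbb{H}$, $\overline{s}$ is its conjugate, $\mathrm{Re}(s)$ its real part and $|s|$ its modulus. $X$ is a two-sided vector space over $\mathbb{H}$ which is a Banach space; $\mathcal{B}(X)$ is the algebra of bounded right $\mathbb{H}$-linear operators on $X$ (i.e. $T(uq+v)=(Tu)q+Tv$ for $u,v\in X$, $q\in\mathbb{H}$), with identity $\mathcal{I}$ and operator norm. For operators and quaternions, $(sT)(v)=s(Tv)$ and $(Ts)(v)=T(sv)$. For $s\in\mathbb{H}$ put $Q_s(T)=T^2-2\mathrm{Re}(s)T+|s|^2\mathcal{I}$. The $S$-resolvent set is $\rho_S(T)=\{s\in\mathbb{H}: Q_s(T)\text{ is invertible in }\mathcal{B}(X)\}$, and the $S$-spectrum is $\sigma_S(T)=\mathbb{H}\setminus\rho_S(T)$. For $s\in\rho_S(T)$ the left $S$-resolvent operator is $S_L^{-1}(s,T)=Q_s(T)^{-1}(\overline{s}\mathcal{I}-T)$. *)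

(* Defs.v *)
From HB Require Import structures.
From mathcomp Require Import all_boot all_order all_algebra.
From mathcomp Require Import all_classical all_reals all_analysis.
From Stdlib Require Import ClassicalEpsilon.
Set Implicit Arguments. Unset Strict Implicit. Unset Printing Implicit Defensive.
Import Order.TTheory GRing.Theory Num.Theory.
Import numFieldNormedType.Exports.
Local Open Scope ring_scope.

Record quat (R : realType) := Quat { q0 : R; q1 : R; q2 : R; q3 : R }.

Section Quat.
Variable R : realType.
Definition qreal (r : R) : quat R := Quat r 0 0 0.
Definition qadd (p q : quat R) : quat R :=
  Quat (q0 p + q0 q) (q1 p + q1 q) (q2 p + q2 q) (q3 p + q3 q).
Definition qmul (p q : quat R) : quat R :=
  Quat (q0 p * q0 q - q1 p * q1 q - q2 p * q2 q - q3 p * q3 q)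
       (q0 p * q1 q + q1 p * q0 q + q2 p * q3 q - q3 p * q2 q)
       (q0 p * q2 q - q1 p * q3 q + q2 p * q0 q + q3 p * q1 q)
       (q0 p * q3 q + q1 p * q2 q - q2 p * q1 q + q3 p * q0 q).
Definition qconj (s : quat R) : quat R := Quat (q0 s) (- q1 s) (- q2 s) (- q3 s).
Definition qRe (s : quat R) : R := q0 s.
Definition qnorm2 (s : quat R) : R := q0 s ^+ 2 + q1 s ^+ 2 + q2 s ^+ 2 + q3 s ^+ 2.
Definition qabs (s : quat R) : R := Num.sqrt (qnorm2 s).
End Quat.

Record two_sided_banach (R : realType) (X : completeNormedModType R)
    (lact : quat R -> X -> X) (ract : X -> quat R -> X) : Prop := {
  lact_addq : forall p q v, lact (qadd p q) v = lact p v + lact q v;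
  lact_addv : forall q u v, lact q (u + v) = lact q u + lact q v;
  lact_mul  : forall p q v, lact (qmul p q) v = lact p (lact q v);
  lact_real : forall r v, lact (qreal r) v = r *: v;
  ract_addq : forall p q v, ract v (qadd p q) = ract v p + ract v q;
  ract_addv : forall q u v, ract (u + v) q = ract u q + ract v q;
  ract_mul  : forall p q v, ract v (qmul p q) = ract (ract v p) q;
  ract_real : forall r v, ract v (qreal r) = r *: v;
  lract_assoc : forall p q v, lact p (ract v q) = ract (lact p v) q;
  lact_norm : forall q v, `|lact q v| = qabs q * `|v|;
  ract_norm : forall q v, `|ract v q| = `|v| * qabs q
}.

Section Ops.
Variables (R : realType) (X : completeNormedModType R).
Variables (lact : quat R -> X -> X) (ract : X -> quat R -> X).

Definition right_linear (T : X -> X) : Prop :=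
  forall (u v : X) (q : quat R), T (ract u q + v) = ract (T u) q + T v.
Definition bounded_op (T : X -> X) : Prop :=
  exists C : R, forall v : X, `|T v| <= C * `|v|.
Definition in_B (T : X -> X) : Prop := right_linear T /\ bounded_op T.

Definition inverse_in_B (A S : X -> X) : Prop :=
  in_B S /\ (forall v, S (A v) = v) /\ (forall v, A (S v) = v).

Definition Qs (s : quat R) (T : X -> X) : X -> X :=
  fun v => T (T v) - (2 * qRe s) *: T v + qnorm2 s *: v.

Definition rho_S (T : X -> X) : set (quat R) :=
  [set s | exists S, inverse_in_B (Qs s T) S].

(* the inverse Q_s(T)^{-1} (uniquely determined when s \in rho_S T) *)
Definition Qs_inv (s : quat R) (T : X -> X) : X -> X :=
  epsilon (inhabits id) (fun S => inverse_in_B (Qs s T) S).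

Definition SL_inv (s : quat R) (T : X -> X) : X -> X :=
  fun v => Qs_inv s T (lact (qconj s) v - T v).

(* left spherical Yosida approximation
   Y_L(s,T) = S_L^{-1}(s,T) s^2 - s I,
   with (A q)(v) = A (q v) and (q A)(v) = q (A v). *)
Definition Yosida_L (s : quat R) (T : X -> X) : X -> X :=
  fun v => SL_inv s T (lact (qmul s s) v) - lact s v.
End Ops.

(* Main.v *)
Require Import Defs.
From HB Require Import structures.
From mathcomp Require Import all_boot all_order all_algebra.
From mathcomp Require Import all_classical all_reals all_analysis.
From Stdlib Require Import ClassicalEpsilon.
From mathcomp Require Import ring.
Set Implicit Arguments. Unset Strict Implicit.
Import Order.TTheory GRing.Theory Num.Theory.
Import numFieldNormedType.Exports.
Local Open Scope ring_scope.

Section Aux.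
Variables (R : realType) (X : completeNormedModType R).
Variables (lact : quat R -> X -> X) (ract : X -> quat R -> X).
Hypothesis HX : two_sided_banach lact ract.

Lemma rl_lin (T : X -> X) : right_linear ract T ->
  forall r u v, T (r *: u + v) = r *: T u + T v.
Proof. by move=> H r u v; rewrite -(ract_real HX) H (ract_real HX). Qed.

Lemma rl_0 (T : X -> X) : right_linear ract T -> T 0 = 0.
Proof.
move=> H; have := rl_lin H 1 0 0; rewrite scaler0 add0r scale1r => E.
by apply: (addrI (T 0)); rewrite addr0 -E.
Qed.

Lemma rl_add (T : X -> X) : right_linear ract T -> forall u v, T (u + v) = T u + T v.
Proof. by move=> H u v; have := rl_lin H 1 u v; rewrite !scale1r. Qed.

Lemma rl_scale (T : X -> X) : right_linear ract T -> forall r u, T (r *: u) = r *: T u.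
Proof. by move=> H r u; have := rl_lin H r u 0; rewrite !addr0 (rl_0 H) addr0. Qed.

Lemma rl_opp (T : X -> X) : right_linear ract T -> forall u, T (- u) = - T u.
Proof. by move=> H u; rewrite -scaleN1r (rl_scale H) scaleN1r. Qed.

Lemma rl_sub (T : X -> X) : right_linear ract T -> forall u v, T (u - v) = T u - T v.
Proof. by move=> H u v; rewrite (rl_add H) (rl_opp H). Qed.
End Aux.

Lemma zm (V : zmodType) (n a b c : V) : n - a - (b - c) = c - (a + b) + n.
Proof. by rewrite opprB opprD [RHS]addrC !addrA [n - a + c]addrAC -!addrA. Qed.

Theorem lemma3p5 (R : realType) (X : completeNormedModType R)
    (lact : quat R -> X -> X) (ract : X -> quat R -> X)
    (HX : two_sided_banach lact ract)
    (T : X -> X) (HT : in_B ract T) (s : quat R) :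
  rho_S ract T s ->
  Yosida_L lact ract s T = (fun v => T (SL_inv lact ract s T (lact s v))).
Proof.
move=> Hr.
have HQ : inverse_in_B ract (Qs s T) (Qs_inv ract s T).
  rewrite /Qs_inv; case: Hr => S HS.
  exact: (epsilon_spec (inhabits id) (fun S => inverse_in_B ract (Qs s T) S) (ex_intro _ S HS)).
case: HQ => [[HQl _] [HQ1 HQ2]].
case: HT => [HTl _].
set Qi := Qs_inv ract s T in HQl HQ1 HQ2 *.
have QT : forall w, Qs s T (T w) = T (Qs s T w).
  by move=> w; rewrite /Qs (rl_add HX HTl) (rl_sub HX HTl) !(rl_scale HX HTl).
have QiT : forall w, Qi (T w) = T (Qi w).
  by move=> w; rewrite -{1}(HQ2 w) -QT HQ1.
apply: funext => v; rewrite /Yosida_L /SL_inv -/Qi.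
set u := lact s v.
rewrite (lact_mul HX) -/u -QiT (rl_sub HX HTl).
set A := _ - T (lact s u).
suff H : Qi A - Qi (T (lact (qconj s) u) - T (T u)) = u.
  by rewrite -[X in _ - X = _]H opprB addrCA subrr addr0.
rewrite -(rl_sub HX HQl) /A.
have E1 : lact (qconj s) (lact s u) = qnorm2 s *: u.
  rewrite -(lact_mul HX) -(lact_real HX); congr lact.
  by rewrite /qmul /qconj /qreal /qnorm2 /=; congr Quat; ring.
have E2 : T (lact s u) + T (lact (qconj s) u) = (2 * qRe s) *: T u.
  rewrite -(rl_add HX HTl) -(lact_addq HX) -(rl_scale HX HTl) -(lact_real HX).
  by congr (T (lact _ u)); rewrite /qadd /qconj /qreal /qRe /=; congr Quat; ring.
rewrite -[RHS]HQ1; congr Qi.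
rewrite /Qs E1 -E2.
exact: (@zm X _ _ _ _).
Qed.
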